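(* For every problem $f$ we have $\overline{f'}\le_{sW}(\overline f)'\equiv_{sW}\overline{(\overline f)'}$. In particular, if $f$ is strongly complete (i.e. $f\equiv_{sW}\overline f$), then its jump $f'$ is strongly complete.
   Context: Represented space $(X,\delta_X)$: set with surjective partial $\delta_X:\subseteq\mathbb{N}^\mathbb{N}\to X$. A problem $f:\subseteq X\rightrightarrows Y$ is a partial multi-valued map with nonempty values on its domain; $F\vdash f$ means $\delta_YF(p)\in f(\delta_X(p))$ whenever $\delta_X(p)\in\mathrm{dom}(f)$. $f\le_{sW}g$ iff there are computable partial $H,K:\subseteq\mathbb{N}^\mathbb{N}\to\mathbb{N}^\mathbb{N}$ with $HGK\vdash f$ for all $G\vdash g$; $\equiv_{sW}$ is the induced equivalence. $\lim:\subseteq\mathbb{N}^\mathbb{N}\to\mathbb{N}^\mathbb{N}$ maps $\langle p_0,p_1,\dots\rangle$ (standard infinite tupling) to $\lim_n p_n$ when it exists. The jump of $f:\subseteq X\rightrightarrows Y$ is $f':\subseteq X'\rightrightarrows Y$, the same multi-valued map with input space $X'=(X,\delta_X\circ\lim)$. For $p\in\mathbb{N}^\mathbb{N}$, $p-1$ is the concatenation of $p(0)-1,p(1)-1,\dots$ with $0-1$ the empty word. The completion of $(X,\delta_X)$ is $\overline X=X\cup\{\bot\}$ with $\delta_{\overline X}(p)=\delta_X(p-1)$ if $p-1$ is an infinite sequence in $\mathrm{dom}(\delta_X)$, $\delta_{\overline X}(p)=\bot$ otherwise; the completion of $f$ is $\overline f:\overline X\rightrightarrows\overline Y$, $\overline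 f(x)=f(x)$ on $\mathrm{dom}(f)$ and $\overline Y$ otherwise. *)

(* Defs.v *)
From Stdlib Require Import Arith Lia List Cantor FunctionalExtensionality.
Import ListNotations.

Definition baire := nat -> nat.

(** * Oracle partial recursive functions (Kleene's mu-recursion relative to
    an oracle p : baire).  [eval p e v y] : machine [e] with oracle [p] on
    argument list [v] halts with output [y]. *)
Inductive rf : Type :=
| rZero : rf
| rSucc : rf
| rProj : nat -> rf
| rOracle : rf
| rComp : rf -> rfs -> rf
| rPrec : rf -> rf -> rf
| rMu : rf -> rf
with rfs : Type :=
| rnil : rfs
| rcons : rf -> rfs -> rfs.

Inductive eval (p : baire) : rf -> list nat -> nat -> Prop :=
| eZero v : eval p rZero v 0
| eSucc v : eval p rSucc v (S (hd 0 v))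
| eProj i v : eval p (rProj i) v (nth i v 0)
| eOracle v : eval p rOracle v (p (hd 0 v))
| eComp f gs v ws y :
    evals p gs v ws -> eval p f ws y -> eval p (rComp f gs) v y
| ePrec0 f g v y : eval p f v y -> eval p (rPrec f g) (0 :: v) y
| ePrecS f g n v r y :
    eval p (rPrec f g) (n :: v) r -> eval p g (n :: r :: v) y ->
    eval p (rPrec f g) (S n :: v) y
| eMu f v n :
    eval p f (n :: v) 0 ->
    (forall m, m < n -> exists k, eval p f (m :: v) (S k)) ->
    eval p (rMu f) v n
with evals (p : baire) : rfs -> list nat -> list nat -> Prop :=
| esNil v : evals p rnil v []
| esCons g gs v y ys :
    eval p g v y -> evals p gs v ys -> evals p (rcons g gs) v (y :: ys).

(** The computable partial map [F : baire -> baire] computed by machine [e]: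
    [runs e p q] iff on input (oracle) [p] the machine outputs every [q n]. *)
Definition runs (e : rf) (p q : baire) : Prop :=
  forall n, eval p e [n] (q n).

(** * Represented spaces: a surjective partial map delta :⊆ baire -> X,
    given as a functional, surjective relation. *)
Record repr_space : Type := {
  carrier :> Type;
  delta : baire -> carrier -> Prop;
  delta_fun : forall p x y, delta p x -> delta p y -> x = y;
  delta_surj : forall x : carrier, exists p, delta p x
}.

(** Problems f :⊆ X ⇉ Y as relations; dom f = {x | exists y, f x y}. *)
Definition problem (X Y : repr_space) : Type := carrier X -> carrier Y -> Prop.

Definition realizes {X Y : repr_space} (F : baire -> baire -> Prop)
  (f : problem X Y) : Prop :=
  forall p x, delta X p x -> (exists y, f x y) ->
    exists q, F p q /\ exists y, delta Y q y /\ f x y.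

Definition sW {X Y Z W : repr_space} (f : problem X Y) (g : problem Z W) : Prop :=
  exists eH eK : rf,
    forall G : baire -> option baire,
      realizes (fun p q => G p = Some q) g ->
      realizes (fun p q => exists q1 q2,
                   runs eK p q1 /\ G q1 = Some q2 /\ runs eH q2 q) f.

Definition sW_equiv {X Y Z W : repr_space} (f : problem X Y) (g : problem Z W) : Prop :=
  sW f g /\ sW g f.

(** Standard infinite tupling via Cantor pairing:
    <p_0,p_1,...>(to_nat (i, j)) = p_i(j).  [lim_rel r q] : the sequence
    coded by r converges to q in Baire space. *)
Definition lim_rel (r q : baire) : Prop :=
  forall k, exists N, forall n, N <= n -> r (to_nat (n, k)) = q k.

Lemma lim_rel_unique r q q' : lim_rel r q -> lim_rel r q' -> q = q'.
Proof.
  intros H1 H2. apply functional_extensionality. intros k.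
  destruct (H1 k) as [N1 HN1]. destruct (H2 k) as [N2 HN2].
  rewrite <- (HN1 (N1 + N2)) by lia. apply HN2. lia.
Qed.

Definition jump_delta (X : repr_space) (r : baire) (x : carrier X) : Prop :=
  exists q, lim_rel r q /\ delta X q x.

Lemma jump_delta_fun X p x y : jump_delta X p x -> jump_delta X p y -> x = y.
Proof.
  intros [q [Hq Hx]] [q' [Hq' Hy]].
  rewrite (lim_rel_unique _ _ _ Hq Hq') in Hx. exact (delta_fun X _ _ _ Hx Hy).
Qed.

Lemma jump_delta_surj X (x : carrier X) : exists p, jump_delta X p x.
Proof.
  destruct (delta_surj X x) as [q Hq].
  exists (fun m => q (snd (of_nat m))). exists q. split; [|exact Hq].
  intros k. exists 0. intros n _. rewrite cancel_of_to. reflexivity.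
Qed.

Definition jump_space (X : repr_space) : repr_space :=
  {| carrier := carrier X; delta := jump_delta X;
     delta_fun := jump_delta_fun X; delta_surj := jump_delta_surj X |}.

Definition jump {X Y : repr_space} (f : problem X Y) : problem (jump_space X) Y := f.

Fixpoint nz_count (p : baire) (i : nat) : nat :=
  match i with
  | 0 => 0
  | S i' => nz_count p i' + (if Nat.eqb (p i') 0 then 0 else 1)
  end.

(** [minus1 p q] : p - 1 (concatenation of p(i)-1, with 0-1 the empty word)
    is the infinite sequence q. *)
Definition minus1 (p q : baire) : Prop :=
  (forall k, exists i, nz_count p i = k /\ p i <> 0) /\
  (forall i, p i <> 0 -> q (nz_count p i) = p i - 1).

Lemma minus1_unique p q q' : minus1 p q -> minus1 p q' -> q = q'.
Proof.
  intros [Hi H1] [_ H2]. apply functional_extensionality. intros k.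
  destruct (Hi k) as [i [<- Hp]]. rewrite H1, H2; auto.
Qed.

Definition compl_delta (X : repr_space) (p : baire) (x : option (carrier X)) : Prop :=
  match x with
  | Some x => exists q, minus1 p q /\ delta X q x
  | None => ~ (exists q x, minus1 p q /\ delta X q x)
  end.

Lemma compl_delta_fun X p x y : compl_delta X p x -> compl_delta X p y -> x = y.
Proof.
  destruct x as [x|], y as [y|]; simpl; intros Hx Hy; auto.
  - destruct Hx as [q [Hq Hx]], Hy as [q' [Hq' Hy]].
    rewrite (minus1_unique _ _ _ Hq Hq') in Hx. f_equal. exact (delta_fun X _ _ _ Hx Hy).
  - destruct Hx as [q [Hq Hx]]. exfalso. apply Hy. eauto.
  - destruct Hy as [q [Hq Hy]]. exfalso. apply Hx. eauto.
Qed.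

Lemma nz_count_succ (q : baire) i : nz_count (fun j => S (q j)) i = i.
Proof. induction i; simpl; auto. rewrite IHi. lia. Qed.

Lemma compl_delta_surj X (x : option (carrier X)) : exists p, compl_delta X p x.
Proof.
  destruct x as [x|].
  - destruct (delta_surj X x) as [q Hq]. exists (fun j => S (q j)). simpl.
    exists q. split; [|exact Hq]. split.
    + intros k. exists k. rewrite nz_count_succ. split; auto.
    + intros i _. rewrite nz_count_succ. lia.
  - exists (fun _ => 0). simpl. intros [q [x [[Hi _] _]]].
    destruct (Hi 0) as [i [_ H]]. apply H; reflexivity.
Qed.

(** completion: overline X = X ∪ {⊥} (⊥ = None) *)
Definition completion_space (X : repr_space) : repr_space :=
  {| carrier := option (carrier X); delta := compl_delta X;
     delta_fun := compl_delta_fun X; delta_surj := compl_delta_surj X |}.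

(** overline f (x) = f(x) for x in dom f, and overline Y otherwise *)
Definition completion {X Y : repr_space} (f : problem X Y) :
  problem (completion_space X) (completion_space Y) :=
  fun xo yo =>
    forall x, xo = Some x -> (exists y, f x y) -> exists y, yo = Some y /\ f x y.

(* Main.v *)
Require Import Defs.
From Stdlib Require Import Arith Lia List Cantor FunctionalExtensionality Bool Classical ClassicalEpsilon.
Import ListNotations.

Fixpoint L (gs : list rf) : rfs := match gs with [] => rnil | g :: gs => rcons g (L gs) end.
Definition C f gs := rComp f (L gs).

Lemma eval_conv p e v y y' : eval p e v y -> y = y' -> eval p e v y'.
Proof. intros H ->; exact H. Qed.

Lemma evalC p f gs v ys y : Forall2 (fun g z => eval p g v z) gs ys -> eval p f ys y -> eval p (C f gs) v y.
Proof.
  intros H Hf. apply eComp with ys; auto. clear Hf. induction H; simpl; constructor; auto.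
Qed.

Create HintDb evdb.
Ltac ev :=
  lazymatch goal with
  | |- eval _ (C _ _) _ _ => eapply evalC; [ evl | ev ]
  | |- eval _ (rProj _) _ _ => eapply eval_conv; [apply eProj | ]
  | |- eval _ rOracle _ _ => eapply eval_conv; [apply eOracle|]
  | |- eval _ rSucc _ _ => eapply eval_conv; [apply eSucc|]
  | |- eval _ rZero _ _ => eapply eval_conv; [apply eZero|]
  | |- eval _ _ _ _ => eapply eval_conv; [solve [eauto with evdb] |]
  end
with evl := first [ apply Forall2_nil | eapply Forall2_cons; [ev | evl] ].
Ltac evs := ev; simpl; try reflexivity.

Fixpoint precf (F : list nat -> nat) (G : nat -> nat -> list nat -> nat) n v :=
  match n with 0 => F v | S n => G n (precf F G n v) v end.

Lemma prec_ok p f g F G (Hf : forall v, eval p f v (F v))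
  (Hg : forall n r v, eval p g (n :: r :: v) (G n r v)) n v :
  eval p (rPrec f g) (n :: v) (precf F G n v).
Proof. induction n; simpl. apply ePrec0; auto. eapply ePrecS; eauto. Qed.

Definition ADD := C (rPrec (rProj 0) (C rSucc [rProj 1])) [rProj 0; rProj 1].
Lemma ADD_ok p a b v : eval p ADD (a :: b :: v) (a + b).
Proof.
  unfold ADD. eapply evalC. evl. all: simpl; try reflexivity.
  eapply eval_conv. apply (prec_ok p _ _ (fun v => nth 0 v 0) (fun n r v => S r)).
  intros; apply eProj. intros; evs. simpl. induction a; simpl; auto.
Qed.
Hint Resolve ADD_ok : evdb.

Definition PRED := C (rPrec rZero (rProj 0)) [rProj 0].
Lemma PRED_ok p a v : eval p PRED (a :: v) (a - 1).
Proof.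
  unfold PRED. eapply evalC. evl. all: simpl; try reflexivity.
  eapply eval_conv. apply (prec_ok p _ _ (fun v => 0) (fun n r v => n)).
  intros; apply eZero. intros; apply eProj. destruct a; simpl; lia.
Qed.
Hint Resolve PRED_ok : evdb.

Definition SUB := C (rPrec (rProj 0) (C PRED [rProj 1])) [rProj 1; rProj 0].
Lemma SUB_ok p a b v : eval p SUB (a :: b :: v) (a - b).
Proof.
  unfold SUB. eapply evalC. evl. all: simpl; try reflexivity.
  eapply eval_conv. apply (prec_ok p _ _ (fun v => nth 0 v 0) (fun n r v => r - 1)).
  intros; apply eProj. intros; evs. simpl. induction b; simpl; lia.
Qed.
Hint Resolve SUB_ok : evdb.

Definition NSG := C (rPrec (C rSucc [rZero]) rZero) [rProj 0].
Lemma NSG_ok p a v : eval p NSG (a :: v) (if a =? 0 then 1 else 0).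
Proof.
  unfold NSG. eapply evalC. evl. all: simpl; try reflexivity.
  eapply eval_conv. apply (prec_ok p _ _ (fun v => 1) (fun n r v => 0)).
  intros; evs. intros; apply eZero. destruct a; reflexivity.
Qed.
Hint Resolve NSG_ok : evdb.

Definition SG := C (rPrec rZero (C rSucc [rZero])) [rProj 0].
Lemma SG_ok p a v : eval p SG (a :: v) (if a =? 0 then 0 else 1).
Proof.
  unfold SG. eapply evalC. evl. all: simpl; try reflexivity.
  eapply eval_conv. apply (prec_ok p _ _ (fun v => 0) (fun n r v => 1)).
  intros; apply eZero. intros; evs. destruct a; reflexivity.
Qed.
Hint Resolve SG_ok : evdb.

Definition DIST := C ADD [C SUB [rProj 0; rProj 1]; C SUB [rProj 1; rProj 0]].
Lemma DIST_ok p a b v : eval p DIST (a :: b :: v) ((a - b) + (b - a)).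
Proof. unfold DIST. evs. Qed.
Hint Resolve DIST_ok : evdb.

Definition COND := C (rPrec (rProj 0) (rProj 3)) [rProj 0; rProj 1; rProj 2].
Lemma COND_ok p c x y v : eval p COND (c :: x :: y :: v) (if c =? 0 then x else y).
Proof.
  unfold COND. eapply evalC. evl. all: simpl; try reflexivity.
  eapply eval_conv. apply (prec_ok p _ _ (fun v => nth 0 v 0) (fun n r v => nth 1 v 0)).
  intros; apply eProj. intros; eapply eval_conv; [apply eProj|reflexivity]. destruct c; reflexivity.
Qed.
Hint Resolve COND_ok : evdb.

Definition Tri d := nat_rec (fun _ => nat) 0 (fun i m => S i + m) d.
Lemma to_nat_Tri x y : to_nat (x, y) = y + Tri (y + x).
Proof. reflexivity. Qed.
Lemma Tri_S d : Tri (S d) = S d + Tri d.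
Proof. reflexivity. Qed.

Definition TRI := C (rPrec rZero (C rSucc [C ADD [rProj 0; rProj 1]])) [rProj 0].
Lemma TRI_ok p d v : eval p TRI (d :: v) (Tri d).
Proof.
  unfold TRI. eapply evalC. evl. all: simpl; try reflexivity.
  eapply eval_conv. apply (prec_ok p _ _ (fun v => 0) (fun n r v => S (n + r))).
  intros; apply eZero. intros; evs. induction d; simpl; auto.
Qed.
Hint Resolve TRI_ok : evdb.

Fixpoint Dn m := match m with 0 => 0 | S n => Dn n + (if Tri (S (Dn n)) <=? S n then 1 else 0) end.

Definition DD := C (rPrec rZero (C ADD [rProj 1; C NSG [C SUB [C TRI [C rSucc [rProj 1]]; C rSucc [rProj 0]]]])) [rProj 0].
Lemma DD_ok p m v : eval p DD (m :: v) (Dn m).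
Proof.
  unfold DD. eapply evalC. evl. all: simpl; try reflexivity.
  eapply eval_conv. apply (prec_ok p _ _ (fun v => 0)
     (fun n r v => r + (if Tri (S r) - S n =? 0 then 1 else 0))).
  intros; apply eZero. intros; evs.
  induction m; [reflexivity|]. cbn [precf Dn]. rewrite IHm. f_equal.
  destruct (Nat.leb_spec (Tri (S (Dn m))) (S m)); destruct (Nat.eqb_spec (Tri (S (Dn m)) - S m) 0);
   simpl in *; lia.
Qed.
Hint Resolve DD_ok : evdb.

Lemma Dn_spec m : Tri (Dn m) <= m < Tri (S (Dn m)).
Proof.
  induction m; cbn [Dn]. simpl; lia.
  destruct (Nat.leb_spec (Tri (S (Dn m))) (S m)).
  - rewrite Nat.add_1_r. rewrite (Tri_S (S (Dn m))). lia.
  - rewrite Nat.add_0_r. lia.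
Qed.

Lemma of_nat_D m : of_nat m = (Dn m - (m - Tri (Dn m)), m - Tri (Dn m)).
Proof.
  pose proof (Dn_spec m) as [H1 H2]. rewrite Tri_S in H2.
  assert (E : to_nat (Dn m - (m - Tri (Dn m)), m - Tri (Dn m)) = m).
  { rewrite to_nat_Tri.
    replace (m - Tri (Dn m) + (Dn m - (m - Tri (Dn m)))) with (Dn m) by lia. lia. }
  rewrite <- E at 1. apply cancel_of_to.
Qed.
Ltac decide_all := repeat (match goal with
   | |- context [?a =? ?b] => destruct (Nat.eqb_spec a b)
   | |- context [?a <=? ?b] => destruct (Nat.leb_spec a b)
   | H : context [?a =? ?b] |- _ => destruct (Nat.eqb_spec a b)
   | H : context [?a <=? ?b] |- _ => destruct (Nat.leb_spec a b) end; simpl in *); try lia.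

Definition SND := C SUB [rProj 0; C TRI [C DD [rProj 0]]].
Lemma SND_ok p m v : eval p SND (m :: v) (snd (of_nat m)).
Proof. unfold SND. evs. rewrite of_nat_D. reflexivity. Qed.
Hint Resolve SND_ok : evdb.
Definition FST := C SUB [C DD [rProj 0]; C SND [rProj 0]].
Lemma FST_ok p m v : eval p FST (m :: v) (fst (of_nat m)).
Proof. unfold FST. evs. rewrite of_nat_D. reflexivity. Qed.
Hint Resolve FST_ok : evdb.
Definition PAIR := C ADD [rProj 1; C TRI [C ADD [rProj 1; rProj 0]]].
Lemma PAIR_ok p x y v : eval p PAIR (x :: y :: v) (to_nat (x, y)).
Proof. unfold PAIR. evs. Qed.
Hint Resolve PAIR_ok : evdb.

Definition CNT := C (rPrec rZero (C ADD [rProj 1; C SG [C rOracle [rProj 0]]])) [rProj 0].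
Lemma CNT_ok p n v : eval p CNT (n :: v) (nz_count p n).
Proof.
  unfold CNT. eapply evalC. evl. all: simpl; try reflexivity.
  eapply eval_conv. apply (prec_ok p _ _ (fun v => 0) (fun n r v => r + (if p n =? 0 then 0 else 1))).
  intros; apply eZero. intros; evs. induction n; [reflexivity|]. cbn [precf nz_count]. rewrite IHn. reflexivity.
Qed.
Hint Resolve CNT_ok : evdb.

Definition col p n := snd (of_nat (nz_count p n)).
Definition COL := C SND [C CNT [rProj 0]].
Lemma COL_ok p n v : eval p COL (n :: v) (col p n).
Proof. unfold COL. evs. Qed.
Hint Resolve COL_ok : evdb.

Fixpoint gfun p n j := match n with 0 => 0 | S n =>
  if p n =? 0 then gfun p n j else if col p n =? j then p n - 1 else gfun p n j end.
Fixpoint Cfun p n j := match n with 0 => 0 | S n =>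
  if p n =? 0 then Cfun p n j else
  if (col p n <=? j) && negb (p n - 1 =? gfun p n (col p n)) then S n else Cfun p n j end.

Definition ORC := C rOracle [rProj 0].
Definition GF := C (rPrec rZero (C COND [C ADD [C NSG [ORC]; C DIST [C COL [rProj 0]; rProj 2]];
                                        C PRED [ORC]; rProj 1])) [rProj 0; rProj 1].
Lemma GF_ok p n j v : eval p GF (n :: j :: v) (gfun p n j).
Proof.
  unfold GF, ORC. eapply evalC. evl. all: simpl; try reflexivity.
  eapply eval_conv. apply (prec_ok p _ _ (fun v => 0) (fun n r w =>
    if (if p n =? 0 then 1 else 0) + ((col p n - nth 0 w 0) + (nth 0 w 0 - col p n)) =? 0 then p n - 1 else r)).
  intros; apply eZero. intros; evs. induction n; [reflexivity|]. cbn [precf gfun]. rewrite IHn. simpl.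
  destruct (Nat.eqb_spec (p n) 0); simpl.
  - reflexivity.
  - destruct (Nat.eqb_spec (col p n) j); destruct (Nat.eqb_spec (col p n - j + (j - col p n)) 0); lia.
Qed.
Hint Resolve GF_ok : evdb.

Definition CF := C (rPrec rZero (C COND [
   C ADD [C ADD [C NSG [ORC]; C SUB [C COL [rProj 0]; rProj 2]];
          C NSG [C DIST [C PRED [ORC]; C GF [rProj 0; C COL [rProj 0]]]]];
   C rSucc [rProj 0]; rProj 1])) [rProj 0; rProj 1].
Lemma CF_ok p n j v : eval p CF (n :: j :: v) (Cfun p n j).
Proof.
  unfold CF, ORC. eapply evalC. evl. all: simpl; try reflexivity.
  eapply eval_conv. apply (prec_ok p _ _ (fun v => 0) (fun n r w =>
    if (if p n =? 0 then 1 else 0) + (col p n - nth 0 w 0) +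
       (if (p n - 1 - gfun p n (col p n)) + (gfun p n (col p n) - (p n - 1)) =? 0 then 1 else 0) =? 0
    then S n else r)).
  intros; apply eZero. intros; evs. induction n; [reflexivity|]. cbn [precf Cfun]. rewrite IHn. simpl.
  destruct (Nat.eqb_spec (p n) 0); simpl.
  - reflexivity.
  - decide_all.
Qed.
Hint Resolve CF_ok : evdb.

Definition sK p n k := if Cfun p n (snd (of_nat k)) =? fst (of_nat k) then S (gfun p n (snd (of_nat k))) else 0.
Definition tK p m := sK p (fst (of_nat m)) (snd (of_nat m)).

Definition K1 := C COND [C DIST [C CF [C FST [rProj 0]; C SND [C SND [rProj 0]]]; C FST [C SND [rProj 0]]];
                         C rSucc [C GF [C FST [rProj 0]; C SND [C SND [rProj 0]]]]; rZero].
Lemma K1_ok p m v : eval p K1 (m :: v) (tK p m).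
Proof.
  unfold K1. evs. unfold tK, sK.
  decide_all.
Qed.

Lemma Cfun_le p n j : Cfun p n j <= n.
Proof. induction n; simpl; auto. decide_all. Qed.

Lemma Cfun_mono p n n' j : n <= n' -> Cfun p n j <= Cfun p n' j.
Proof.
  induction 1; auto. simpl. pose proof (Cfun_le p m j). decide_all.
Qed.

Lemma Cfun_mono_j p n j j' : j <= j' -> Cfun p n j <= Cfun p n j'.
Proof.
  intros Hj. induction n; simpl; auto. pose proof (Cfun_le p n j). pose proof (Cfun_le p n j').
  decide_all.
Qed.

Lemma nondecr_stable (f : nat -> nat) c : (forall n n', n <= n' -> f n <= f n') -> (forall n, f n <= c) ->
  exists N, forall n, N <= n -> f n = f N.
Proof.
  intros Hm Hb.
  assert (forall d N0, c - f N0 = d -> exists N, forall n, N <= n -> f n = f N).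
  { induction d as [d IH] using lt_wf_ind. intros N0 Hd.
    destruct (classic (exists n, N0 <= n /\ f n <> f N0)) as [[n [H1 H2]]|H].
    - refine (IH (c - f n) _ n eq_refl). pose proof (Hm _ _ H1). pose proof (Hb n). lia.
    - exists N0. intros n Hn. apply NNPP. intro; apply H; eauto. }
  exact (H _ 0 eq_refl).
Qed.

Lemma gfun_stable p N j : (forall n, N <= n -> Cfun p n j = Cfun p N j) ->
  forall n, N <= n -> gfun p n j = gfun p N j.
Proof.
  intros HC n Hn. induction Hn; auto. simpl.
  pose proof (HC (S m) (le_S _ _ Hn)). pose proof (HC m Hn). simpl in H.
  pose proof (Cfun_le p m j). rewrite <- IHHn.
  destruct (Nat.eqb_spec (p m) 0); auto.
  destruct (Nat.eqb_spec (col p m) j); auto. subst j.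
  destruct (Nat.leb_spec (col p m) (col p m)); try lia.
  destruct (Nat.eqb_spec (p m - 1) (gfun p m (col p m))); simpl in *; auto. lia.
Qed.

Lemma sK_conv p k : exists N, forall n, N <= n -> sK p n k = sK p N k.
Proof.
  unfold sK. set (c := fst (of_nat k)). set (j := snd (of_nat k)).
  destruct (classic (exists n0, c < Cfun p n0 j)) as [[n0 H]|H].
  - exists n0. intros n Hn. pose proof (Cfun_mono p _ _ j Hn). decide_all.
  - destruct (nondecr_stable (fun n => Cfun p n j) c) as [N HN].
    + intros; apply Cfun_mono; auto.
    + intros n. destruct (Nat.le_gt_cases (Cfun p n j) c); auto. exfalso; apply H; eauto.
    + exists N. intros n Hn. rewrite (HN n Hn). rewrite (gfun_stable p N j HN n Hn). reflexivity.
Qed.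

Lemma nz_count_mono p i i' : i <= i' -> nz_count p i <= nz_count p i'.
Proof. induction 1; simpl; auto. lia. Qed.
Lemma nz_count_S_nz p i : p i <> 0 -> nz_count p (S i) = S (nz_count p i).
Proof. intros. simpl. destruct (Nat.eqb_spec (p i) 0); lia. Qed.

Lemma Tri_mono a b : a <= b -> Tri a <= Tri b.
Proof. induction 1; auto. rewrite Tri_S. lia. Qed.
Lemma to_nat_mono1 m M j : m <= M -> to_nat (m, j) <= to_nat (M, j).
Proof. intros. rewrite !to_nat_Tri. pose proof (Tri_mono (j + m) (j + M)). lia. Qed.
Lemma to_nat_lt c c' j : c <= c' -> to_nat (c, j) < to_nat (c', S j).
Proof. intros. rewrite !to_nat_Tri. pose proof (Tri_mono (j + c) (S j + c')). lia. Qed.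

Section ClaimB.
Variables (p r q : baire).
Hypothesis Hm : minus1 p r.
Hypothesis Hl : lim_rel r q.

Lemma g_conv j : exists N, forall n, N <= n -> gfun p n j = q j.
Proof.
  destruct Hm as [Hm1 Hm2]. destruct (Hl j) as [M HM].
  destruct (Hm1 (to_nat (M, j))) as [i0 [Hi0 Hp0]].
  exists (S i0). intros n Hn. induction Hn.
  - simpl. destruct (Nat.eqb_spec (p i0) 0); try lia.
    unfold col. rewrite Hi0, cancel_of_to. simpl. rewrite Nat.eqb_refl.
    rewrite <- Hm2 by auto. rewrite Hi0. apply HM. lia.
  - simpl. destruct (Nat.eqb_spec (p m) 0); auto.
    destruct (Nat.eqb_spec (col p m) j); auto.
    rewrite <- Hm2 by auto.
    destruct (of_nat (nz_count p m)) as [a b] eqn:E.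
    unfold col in e. rewrite E in e. simpl in e. subst b.
    assert (Ec : nz_count p m = to_nat (a, j)) by (rewrite <- E; symmetry; apply cancel_to_of).
    rewrite Ec. apply HM.
    destruct (Nat.le_gt_cases M a) as [|Hlt]; auto.
    pose proof (to_nat_mono1 a M j (Nat.lt_le_incl _ _ Hlt)).
    pose proof (nz_count_mono p (S i0) m Hn). rewrite nz_count_S_nz in H0 by auto.
    assert (to_nat (a, j) <> to_nat (M, j)) by (intro X; apply to_nat_inj in X; inversion X; lia).
    lia.
Qed.

Lemma g_conv_all j : exists N, forall n, N <= n -> forall i, i <= j -> gfun p n i = q i.
Proof.
  induction j.
  - destruct (g_conv 0) as [N HN]. exists N. intros n Hn i Hi. assert (i = 0) by lia. subst; auto.
  - destruct IHj as [N1 H1]. destruct (g_conv (S j)) as [N2 H2]. exists (N1 + N2).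
    intros n Hn i Hi. destruct (Nat.eq_dec i (S j)). subst; apply H2; lia. apply H1; lia.
Qed.

Lemma C_stab j : exists c N, forall n, N <= n -> Cfun p n j = c /\ forall i, i <= j -> gfun p n i = q i.
Proof.
  destruct (g_conv_all j) as [N HN]. exists (Cfun p N j), N.
  intros n Hn. split; [|apply HN; auto]. induction Hn; auto.
  simpl. rewrite <- IHHn. destruct (Nat.eqb_spec (p m) 0); auto.
  destruct (Nat.leb_spec (col p m) j); simpl; auto.
  assert (E1 : gfun p (S m) (col p m) = q (col p m)) by (apply HN; lia).
  assert (E2 : gfun p m (col p m) = q (col p m)) by (apply HN; lia).
  simpl in E1. destruct (Nat.eqb_spec (p m) 0); try lia. rewrite Nat.eqb_refl in E1.
  rewrite E1, E2, Nat.eqb_refl. reflexivity.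
Qed.

Definition cj j := proj1_sig (constructive_indefinite_description _ (C_stab j)).
Lemma cj_spec j : exists N, forall n, N <= n -> Cfun p n j = cj j /\ forall i, i <= j -> gfun p n i = q i.
Proof. unfold cj. destruct (constructive_indefinite_description _ (C_stab j)). simpl. auto. Qed.

Lemma cj_mono j : cj j <= cj (S j).
Proof.
  destruct (cj_spec j) as [N1 H1]. destruct (cj_spec (S j)) as [N2 H2].
  destruct (H1 (N1 + N2)) as [<- _]; try lia. destruct (H2 (N1 + N2)) as [<- _]; try lia.
  apply Cfun_mono_j; lia.
Qed.

Variable s : baire.
Hypothesis Hs : lim_rel (tK p) s.

Lemma s_val c j : s (to_nat (c, j)) = if cj j =? c then S (q j) else 0.
Proof.
  destruct (cj_spec j) as [N1 H1]. destruct (Hs (to_nat (c, j))) as [N2 H2].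
  rewrite <- (H2 (N1 + N2)) by lia. unfold tK. rewrite !cancel_of_to. cbn [fst snd].
  unfold sK. rewrite ?cancel_of_to. cbn [fst snd]. destruct (H1 (N1 + N2)) as [-> H3]; try lia.
  rewrite H3; auto.
Qed.

Definition hh j := to_nat (cj j, j).

Lemma nz_zero_range (s0 : baire) a b : a <= b -> (forall i, a <= i < b -> s0 i = 0) -> nz_count s0 b = nz_count s0 a.
Proof.
  induction 1; auto. intros H'. simpl. rewrite IHle by (intros; apply H'; lia).
  rewrite H' by lia. simpl. lia.
Qed.

Lemma hh_mono j j' : j < j' -> hh j < hh j'.
Proof.
  induction 1. apply to_nat_lt, cj_mono.
  eapply Nat.lt_trans; eauto. apply to_nat_lt, cj_mono.
Qed.

Lemma s_nz k : s k <> 0 -> exists j, k = hh j.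
Proof.
  intros H. rewrite <- (cancel_to_of k) in *. destruct (of_nat k) as [c j].
  rewrite s_val in H. exists j. unfold hh. destruct (Nat.eqb_spec (cj j) c); subst; auto. lia.
Qed.

Lemma s_hh j : s (hh j) = S (q j).
Proof. unfold hh. rewrite s_val, Nat.eqb_refl. auto. Qed.

Lemma nz_hh j : nz_count s (hh j) = j.
Proof.
  induction j.
  - rewrite (nz_zero_range s 0 (hh 0)); auto. lia.
    intros i [_ Hi]. destruct (Nat.eq_dec (s i) 0); auto. destruct (s_nz i n) as [j' ->].
    destruct j'. lia. pose proof (hh_mono 0 (S j')). lia.
  - pose proof (hh_mono j (S j) (Nat.lt_succ_diag_r j)).
    rewrite (nz_zero_range s (S (hh j)) (hh (S j))); auto.
    + rewrite nz_count_S_nz. lia. rewrite s_hh. lia.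
    + intros i [Hi1 Hi2]. destruct (Nat.eq_dec (s i) 0); auto. destruct (s_nz i n) as [j' ->].
      destruct (Nat.lt_trichotomy j' j) as [X|[X|X]].
      * pose proof (hh_mono _ _ X). lia.
      * subst. lia.
      * destruct (Nat.lt_trichotomy j' (S j)) as [Y|[Y|Y]]; try lia. subst; lia.
        pose proof (hh_mono _ _ Y). lia.
Qed.

Lemma claimB : minus1 s q.
Proof.
  split.
  - intros k. exists (hh k). rewrite nz_hh, s_hh. auto.
  - intros i Hi. destruct (s_nz i Hi) as [j ->]. rewrite nz_hh, s_hh. lia.
Qed.
End ClaimB.

Lemma completion_total {X Y : repr_space} (f : problem X Y) xo : exists yo, completion f xo yo.
Proof.
  destruct (classic (exists x y, xo = Some x /\ f x y)) as [[x [y [-> H]]]|H].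
  - exists (Some y). intros x' [= <-] _. eauto.
  - exists None. intros x -> [y Hy]. exfalso; apply H; eauto.
Qed.

Lemma compl_delta_ex (X : repr_space) p : exists xo, compl_delta X p xo.
Proof.
  destruct (classic (exists q x, minus1 p q /\ delta X q x)) as [[q [x H]]|H].
  - exists (Some x). simpl. eauto.
  - exists None. exact H.
Qed.

Lemma runs_oracle q : runs rOracle q q.
Proof. intros n. apply eOracle. Qed.

Lemma tK_pair p n k : tK p (to_nat (n, k)) = sK p n k.
Proof. unfold tK. rewrite cancel_of_to. reflexivity. Qed.

Lemma tK_lim p : exists s, lim_rel (tK p) s.
Proof.
  exists (fun k => sK p (proj1_sig (constructive_indefinite_description _ (sK_conv p k))) k).
  intros k. destruct (constructive_indefinite_description _ (sK_conv p k)) as [N HN]; cbn [proj1_sig].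
  exists N. intros n Hn. rewrite tK_pair. auto.
Qed.

Lemma part1 (X Y : repr_space) (f : problem X Y) : sW (completion (jump f)) (jump (completion f)).
Proof.
  exists rOracle, K1. intros G HG p xo Hp _.
  assert (Ht : runs K1 p (tK p)) by (intros m; apply K1_ok).
  destruct (tK_lim p) as [s Hs].
  destruct (compl_delta_ex X s) as [zo Hz].
  destruct (completion_total f zo) as [yo0 Hyo0].
  destruct (HG (tK p) zo) as [q2 [HGq [yo [Hyo Hf]]]].
  { simpl. exists s. split; auto. }
  { exists yo0. exact Hyo0. }
  exists q2. split. { exists (tK p), q2. split; auto. split; auto. apply runs_oracle. }
  exists yo. split; auto. intros x -> Hdom.
  simpl in Hp. destruct Hp as [r [Hr [q' [Hl Hq']]]].
  pose proof (claimB p r q' Hr Hl s Hs) as Hm.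
  assert (zo = Some x). { apply (compl_delta_fun X s); auto. simpl. eauto. }
  subst zo. apply Hf; auto.
Qed.

Fixpoint eval_det p e v y (H : eval p e v y) {struct H} : forall y', eval p e v y' -> y = y'
with evals_det p gs v ys (H : evals p gs v ys) {struct H} : forall ys', evals p gs v ys' -> ys = ys'.
Proof.
- destruct H as [v|v|i v|v|f gs v ws y Hs Hf|f g v y Hf|f g n v r y Hr Hg|f v n Hf Hlt];
    intros y' H'; inversion H'; subst; auto.
  + match goal with H2 : evals p gs v ?w, H3 : eval p f ?w y' |- _ =>
      pose proof (evals_det _ _ _ _ Hs _ H2); subst; exact (eval_det _ _ _ _ Hf _ H3) end.
  + match goal with H3 : eval p f v y' |- _ => exact (eval_det _ _ _ _ Hf _ H3) end.
  + match goal with H2 : eval p (rPrec f g) (n :: v) ?w, H3 : eval p g (n :: ?w :: v) y' |- _ =>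
      pose proof (eval_det _ _ _ _ Hr _ H2); subst; exact (eval_det _ _ _ _ Hg _ H3) end.
  + match goal with H2 : eval p f (y' :: v) 0, H3 : forall m, m < y' -> _ |- _ =>
    destruct (Nat.lt_trichotomy n y') as [Hl|[Hl|Hl]]; auto;
    [ destruct (H3 n Hl) as [k Hk]; pose proof (eval_det _ _ _ _ Hf _ Hk); discriminate
    | destruct (Hlt y' Hl) as [k Hk]; pose proof (eval_det _ _ _ _ Hk _ H2); discriminate ] end.
- destruct H as [v|g gs v y ys Hg Hgs]; intros ys' H'; inversion H'; subst; auto.
  match goal with H2 : eval p g v ?a, H3 : evals p gs v ?b |- _ =>
  pose proof (eval_det _ _ _ _ Hg _ H2); pose proof (evals_det _ _ _ _ Hgs _ H3); subst; auto end.
Qed.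

Lemma runs_fun e p a b : runs e p a -> runs e p b -> a = b.
Proof. intros Ha Hb. apply functional_extensionality. intros n. eapply eval_det; eauto. Qed.

Fixpoint sub (o : rf) (e : rf) : rf :=
  match e with
  | rOracle => C o [rProj 0]
  | rComp f gs => rComp (sub o f) (subs o gs)
  | rPrec f g => rPrec (sub o f) (sub o g)
  | rMu f => rMu (sub o f)
  | e => e
  end
with subs o gs := match gs with rnil => rnil | rcons g gs => rcons (sub o g) (subs o gs) end.

Section Sub.
Variables (o : rf) (p q : baire).
Hypothesis Ho : runs o p q.
Fixpoint sub_ok e v y (H : eval q e v y) {struct H} : eval p (sub o e) v y
with subs_ok gs v ys (H : evals q gs v ys) {struct H} : evals p (subs o gs) v ys.
Proof.
- destruct H as [v|v|i v|v|f gs v ws y Hs Hf|f g v y Hf|f g n v r y Hr Hg|f v n Hf Hlt]; simpl.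
  + constructor.
  + constructor.
  + constructor.
  + eapply evalC; [eapply Forall2_cons; [apply eProj| apply Forall2_nil] | ].
    eapply eval_conv; [apply Ho|]. destruct v; reflexivity.
  + eapply eComp; [exact (subs_ok _ _ _ Hs) | exact (sub_ok _ _ _ Hf)].
  + apply ePrec0; exact (sub_ok _ _ _ Hf).
  + eapply ePrecS; [exact (sub_ok _ _ _ Hr) | exact (sub_ok _ _ _ Hg)].
  + constructor; [exact (sub_ok _ _ _ Hf)|]. intros m Hm. destruct (Hlt m Hm) as [k Hk]. exists k. exact (sub_ok _ _ _ Hk).
- destruct H as [v|g gs v y ys Hg Hgs]; simpl; constructor; [exact (sub_ok _ _ _ Hg)|exact (subs_ok _ _ _ Hgs)].
Qed.
End Sub.

Lemma runs_sub o e p a b : runs o p a -> runs e a b -> runs (sub o e) p b.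
Proof. intros H1 H2 n. apply (sub_ok o p a H1). apply H2. Qed.

Definition choose_opt (P : baire -> Prop) : option baire :=
  match excluded_middle_informative (exists q, P q) with
  | left H => Some (proj1_sig (constructive_indefinite_description _ H))
  | right _ => None end.
Lemma choose_opt_some P q : choose_opt P = Some q -> P q.
Proof.
  unfold choose_opt. destruct (excluded_middle_informative _); [|discriminate].
  destruct (constructive_indefinite_description _ _); simpl. intros [= <-]; auto.
Qed.
Lemma choose_opt_ex P q : P q -> exists q', choose_opt P = Some q' /\ P q'.
Proof.
  intros H. unfold choose_opt. destruct (excluded_middle_informative _) as [e|n].
  - destruct (constructive_indefinite_description _ _); simpl. eauto.
  - exfalso; eauto.
Qed.

Lemma sW_trans {X Y Z W U V : repr_space} (f : problem X Y) (g : problem Z W) (h : problem U V) :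
  sW f g -> sW g h -> sW f h.
Proof.
  intros [eH1 [eK1 H1]] [eH2 [eK2 H2]].
  exists (sub eH2 eH1), (sub eK1 eK2). intros G HG.
  set (P a q := exists b b2, runs eK2 a b /\ G b = Some b2 /\ runs eH2 b2 q).
  set (G' a := choose_opt (P a)).
  assert (HG' : realizes (fun p q => G' p = Some q) g).
  { intros a z Ha Hd. destruct (H2 G HG a z Ha Hd) as [qq [Hq Hy]].
    destruct (choose_opt_ex (P a) qq Hq) as [q' [E Hq']]. exists q'. split; auto.
    destruct Hq as [b [b2 [R1 [R2 R3]]]]. destruct Hq' as [b' [b2' [R1' [R2' R3']]]].
    pose proof (runs_fun _ _ _ _ R1 R1'); subst b'. rewrite R2 in R2'. injection R2' as ->.
    pose proof (runs_fun _ _ _ _ R3 R3'); subst. auto. }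
  intros p x Hp Hd. destruct (H1 G' HG' p x Hp Hd) as [q [[q1 [q2 [R1 [R2 R3]]]] Hy]].
  exists q. split; auto. apply choose_opt_some in R2. destruct R2 as [b [b2 [S1 [S2 S3]]]].
  exists b, b2. split; [|split]; auto. eapply runs_sub; eauto. eapply runs_sub; eauto.
Qed.

Lemma realizer_exists {X Y : repr_space} (h : problem X Y) : exists G, realizes (fun p q => G p = Some q) h.
Proof.
  exists (fun p => choose_opt (fun q => exists z y, delta X p z /\ delta Y q y /\ h z y)).
  intros p z Hp [y Hy]. destruct (delta_surj Y y) as [q Hq].
  destruct (choose_opt_ex (fun q => exists z y, delta X p z /\ delta Y q y /\ h z y) q) as [q' [E [z' [y' [H1 [H2 H3]]]]]].
  eauto. exists q'. split; auto. pose proof (delta_fun X _ _ _ Hp H1); subst. eauto.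
Qed.

Definition TEST := C ADD [C DIST [C CNT [rProj 0]; rProj 1]; C NSG [C rOracle [rProj 0]]].
Lemma TEST_ok w i k v : eval w TEST (i :: k :: v)
  ((nz_count w i - k) + (k - nz_count w i) + (if w i =? 0 then 1 else 0)).
Proof. unfold TEST. evs. Qed.

Definition DEC := C PRED [C rOracle [rMu TEST]].

Lemma least_ex (P : nat -> Prop) : (exists n, P n) -> exists n, P n /\ forall m, m < n -> ~ P m.
Proof.
  intros [n Hn]. induction n as [n IH] using lt_wf_ind.
  destruct (classic (exists m, m < n /\ P m)) as [[m [Hm Pm]]|H]. eauto.
  exists n. split; auto. intros m Hm Pm. eauto.
Qed.

Lemma DEC_ok w q : minus1 w q -> runs DEC w q.
Proof.
  intros [Hm1 Hm2] k. destruct (least_ex (fun i => nz_count w i = k /\ w i <> 0) (Hm1 k)) as [i [[Hi Hw] Hl]].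
  unfold DEC. eapply evalC. eapply Forall2_cons; [|apply Forall2_nil].
  eapply evalC. eapply Forall2_cons; [|apply Forall2_nil].
  - apply eMu.
    + eapply eval_conv. apply (TEST_ok w i k []). destruct (Nat.eqb_spec (w i) 0); lia.
    + intros m Hm. specialize (Hl m Hm).
      exists ((nz_count w m - k) + (k - nz_count w m) + (if w m =? 0 then 1 else 0) - 1).
      eapply eval_conv. apply (TEST_ok w m k []).
      destruct (Nat.eqb_spec (w m) 0); [lia|]. assert (nz_count w m <> k) by tauto. lia.
  - apply eOracle.
  - eapply eval_conv. apply PRED_ok. simpl. rewrite <- Hi, Hm2; auto.
Qed.

Definition SUCCO := C rSucc [rOracle].
Lemma SUCCO_ok p : runs SUCCO p (fun n => S (p n)).
Proof. intros n. unfold SUCCO. evs. Qed.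
Definition PREDO := C PRED [rOracle].
Lemma PREDO_ok p : runs PREDO p (fun n => p n - 1).
Proof. intros n. unfold PREDO. evs. Qed.

Lemma minus1_succ q : minus1 (fun j => S (q j)) q.
Proof.
  split.
  - intros k. exists k. rewrite nz_count_succ. split; auto.
  - intros i _. rewrite nz_count_succ. lia.
Qed.

Lemma L4 {X Y : repr_space} (f : problem X Y) : sW f (completion f).
Proof.
  exists DEC, SUCCO. intros G HG p x Hp Hd.
  destruct (completion_total f (Some x)) as [yo0 Hyo0].
  destruct (HG (fun n => S (p n)) (Some x)) as [q2 [E [yo [Hyo Hc]]]].
  { simpl. exists p. split; auto. apply minus1_succ. }
  { eauto. }
  destruct (Hc x eq_refl Hd) as [y [-> Hf]]. simpl in Hyo. destruct Hyo as [qq [Hm Hqq]].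
  exists qq. split; eauto. exists (fun n => S (p n)), q2. split; [apply SUCCO_ok|]. split; auto.
  apply DEC_ok; auto.
Qed.

Lemma nz_pred p u : minus1 p u -> forall i, nz_count (fun k => p k - 1) i = nz_count u (nz_count p i).
Proof.
  intros [_ H2] i. induction i; simpl; auto. rewrite IHi.
  destruct (Nat.eqb_spec (p i) 0).
  - rewrite e. simpl. rewrite Nat.add_0_r. auto.
  - rewrite Nat.add_1_r. simpl. rewrite H2 by auto. reflexivity.
Qed.

Lemma minus1_pred p u v : minus1 p u -> (minus1 (fun k => p k - 1) v <-> minus1 u v).
Proof.
  intros Hm. pose proof (nz_pred p u Hm) as Hn. destruct Hm as [Hm1 Hm2]. split.
  - intros [A B]. split.
    + intros k. destruct (A k) as [i [Hi Hp]]. exists (nz_count p i).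
      rewrite <- Hn. split; auto. rewrite Hm2 by lia. auto.
    + intros i' Hi'. destruct (Hm1 i') as [i [<- Hpi]]. rewrite Hm2 in * by auto.
      rewrite <- Hn. rewrite B by auto. lia.
  - intros [A B]. split.
    + intros k. destruct (A k) as [i' [Hi' Hu]]. destruct (Hm1 i') as [i [<- Hpi]].
      exists i. rewrite Hn. split; auto. rewrite Hm2 in Hu by auto. auto.
    + intros i Hi. rewrite Hn. rewrite B. rewrite Hm2; lia. rewrite Hm2; lia.
Qed.

Lemma L5 {X Y : repr_space} (f : problem X Y) : sW (completion (completion f)) (completion f).
Proof.
  exists SUCCO, PREDO. intros G HG p xoo Hp _.
  set (p' := fun k => p k - 1).
  destruct (compl_delta_ex X p') as [zo Hz].
  destruct (completion_total f zo) as [yo0 Hyo0].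
  destruct (HG p' zo Hz) as [q2 [E [yo [Hyo Hc]]]]; eauto.
  exists (fun n => S (q2 n)). split.
  { exists p', q2. split; [apply PREDO_ok|]. split; auto. apply SUCCO_ok. }
  exists (Some yo). split. { simpl. exists q2. split; auto. apply minus1_succ. }
  intros xo -> Hd. exists yo. split; auto.
  simpl in Hp. destruct Hp as [u [Hu Hxo]].
  assert (zo = xo).
  { apply (compl_delta_fun X p'); auto. destruct xo as [x|]; simpl in *.
    - destruct Hxo as [v [Hv Hx]]. exists v. split; auto. apply (minus1_pred p u v Hu); auto.
    - intros [v [x [Hv Hx]]]. apply Hxo. exists v, x. split; auto. apply (minus1_pred p u v Hu); auto. }
  subst; auto.
Qed.

Fixpoint projs (i n : nat) : list rf := match n with 0 => [] | S n => rProj i :: projs (S i) n end.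

Lemma projs_ok p u : forall pre, Forall2 (fun g z => eval p g (pre ++ u) z) (projs (length pre) (length u)) u.
Proof.
  induction u as [|x u IH]; intros pre; simpl. constructor.
  constructor.
  - eapply eval_conv. apply eProj. apply nth_middle.
  - specialize (IH (pre ++ [x])). rewrite <- app_assoc in IH. rewrite length_app in IH. simpl in IH.
    rewrite Nat.add_1_r in IH. exact IH.
Qed.

Lemma evals_L p gs v ys : Forall2 (fun g z => eval p g v z) gs ys -> evals p (L gs) v ys.
Proof. induction 1; simpl; constructor; auto. Qed.

Fixpoint rlen gs := match gs with rnil => 0 | rcons _ gs => S (rlen gs) end.
Lemma evals_len p gs v ws : evals p gs v ws -> length ws = rlen gs.
Proof. induction 1; simpl; auto. Qed.

Fixpoint T (a : nat) (e : rf) {struct e} : rf :=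
  match e with
  | rZero => rZero
  | rSucc => C rSucc [rProj 1]
  | rProj i => rProj (S i)
  | rOracle => C rOracle [C PAIR [rProj 0; rProj 1]]
  | rComp f gs => rComp (T (rlen gs) f) (rcons (rProj 0) (Ts a gs))
  | rPrec f g => match a with 0 => rZero | S a' =>
      rComp (rPrec (T a' f) (C (T (S (S a')) g) (rProj 2 :: rProj 0 :: rProj 1 :: projs 3 a')))
            (L (rProj 1 :: rProj 0 :: projs 2 a')) end
  | rMu f => rMu (C (T (S a) f) (rProj 1 :: rProj 0 :: projs 2 a))
  end
with Ts (a : nat) (gs : rfs) {struct gs} : rfs :=
  match gs with rnil => rnil | rcons g gs => rcons (T a g) (Ts a gs) end.

Lemma projs_swap p n m v : Forall2 (fun g z => eval p g (n :: m :: v) z) (rProj 1 :: rProj 0 :: projs 2 (length v)) (m :: n :: v).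
Proof. constructor. apply eProj. constructor. apply eProj. apply (projs_ok p v [n; m]). Qed.

Lemma projs_rot p n m r v : Forall2 (fun g z => eval p g (m :: r :: n :: v) z)
  (rProj 2 :: rProj 0 :: rProj 1 :: projs 3 (length v)) (n :: m :: r :: v).
Proof. constructor. apply eProj. constructor. apply eProj. constructor. apply eProj. apply (projs_ok p v [m; r; n]). Qed.

Lemma comp_inv p f gs v ws y : eval p (rComp f gs) v y -> evals p gs v ws -> eval p f ws y.
Proof. intros H Hs. inversion H; subst. rewrite (evals_det _ _ _ _ Hs _ H2). auto. Qed.

Section Tsec.
Variables (r : baire) (n : nat).
Let rn := fun j => r (to_nat (n, j)).

Fixpoint T_ok e v y (H : eval rn e v y) {struct H} : forall a, length v = a -> eval r (T a e) (n :: v) y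
with Ts_ok gs v ws (H : evals rn gs v ws) {struct H} : forall a, length v = a -> evals r (Ts a gs) (n :: v) ws.
Proof.
- destruct H as [v|v|i v|v|f gs v ws y Hs Hf|f g v y Hf|f g m v r0 y Hr Hg|f v k Hf Hlt]; intros a Ha; simpl.
  + constructor.
  + eapply evalC. constructor; [apply eProj|constructor]. eapply eval_conv. apply eSucc. destruct v; reflexivity.
  + exact (eProj r (S i) (n :: v)).
  + eapply evalC. constructor; [|constructor]. eapply evalC.
    constructor; [apply eProj|constructor; [apply eProj|constructor]].
    apply PAIR_ok. eapply eval_conv. apply eOracle. destruct v; reflexivity.
  + eapply eComp. constructor. apply eProj. exact (Ts_ok _ _ _ Hs a Ha).
    simpl. exact (T_ok _ _ _ Hf _ (evals_len _ _ _ _ Hs)).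
  + subst a. cbn [T length]. eapply eComp. exact (evals_L _ _ _ _ (projs_swap r n 0 v)).
    apply ePrec0. exact (T_ok _ _ _ Hf _ eq_refl).
  + subst a. cbn [T length]. eapply eComp. exact (evals_L _ _ _ _ (projs_swap r n (S m) v)).
    pose proof (T_ok _ _ _ Hr (length (m :: v)) eq_refl) as IH1. simpl in IH1.
    eapply ePrecS.
    * eapply comp_inv. exact IH1. exact (evals_L _ _ _ _ (projs_swap r n m v)).
    * eapply evalC. apply projs_rot. exact (T_ok _ _ _ Hg _ eq_refl).
  + subst a. apply eMu.
    * eapply evalC. apply projs_swap. exact (T_ok _ _ _ Hf _ eq_refl).
    * intros j Hj. destruct (Hlt j Hj) as [z Hz]. exists z.
      eapply evalC. apply projs_swap. exact (T_ok _ _ _ Hz _ eq_refl).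
- destruct H as [v|g gs v y ys Hg Hgs]; intros a Ha; simpl; constructor.
  exact (T_ok _ _ _ Hg _ Ha). exact (Ts_ok _ _ _ Hgs _ Ha).
Qed.
End Tsec.

Definition agree N (p q : baire) := forall j, j < N -> p j = q j.
Lemma agree_le N N' p q : N <= N' -> agree N' p q -> agree N p q.
Proof. intros H A j Hj. apply A. lia. Qed.

Fixpoint cont q e v y (H : eval q e v y) {struct H} : exists N, forall p', agree N p' q -> eval p' e v y
with conts q gs v ys (H : evals q gs v ys) {struct H} : exists N, forall p', agree N p' q -> evals p' gs v ys.
Proof.
- destruct H as [v|v|i v|v|f gs v ws y Hs Hf|f g v y Hf|f g m v r0 y Hr Hg|f v k Hf Hlt].
  + exists 0; intros; constructor.
  + exists 0; intros; constructor.
  + exists 0; intros; constructor.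
  + exists (S (hd 0 v)). intros p' A. eapply eval_conv. apply eOracle. apply A. lia.
  + destruct (conts _ _ _ _ Hs) as [N1 H1]. destruct (cont _ _ _ _ Hf) as [N2 H2].
    exists (N1 + N2). intros p' A. eapply eComp. apply H1. eapply agree_le; [|eauto]; lia.
    apply H2. eapply agree_le; [|eauto]; lia.
  + destruct (cont _ _ _ _ Hf) as [N1 H1]. exists N1. intros p' A. apply ePrec0. auto.
  + destruct (cont _ _ _ _ Hr) as [N1 H1]. destruct (cont _ _ _ _ Hg) as [N2 H2].
    exists (N1 + N2). intros p' A. eapply ePrecS. apply H1. eapply agree_le; [|eauto]; lia.
    apply H2. eapply agree_le; [|eauto]; lia.
  + destruct (cont _ _ _ _ Hf) as [N1 H1].
    assert (Hb : forall k', k' <= k -> exists N, forall p', agree N p' q ->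
               forall j, j < k' -> exists z, eval p' f (j :: v) (S z)).
    { induction k' as [|k' IH]; intros Hk'.
      - exists 0. intros; lia.
      - destruct IH as [N2 H2]; [lia|]. destruct (Hlt k' Hk') as [z Hz].
        destruct (cont _ _ _ _ Hz) as [N3 H3]. exists (N2 + N3). intros p' A j Hj.
        destruct (Nat.eq_dec j k').
        + subst. exists z. apply H3. eapply agree_le; [|eauto]; lia.
        + apply H2; [eapply agree_le; [|eauto]; lia | lia]. }
    destruct (Hb k (le_n k)) as [N2 H2]. exists (N1 + N2). intros p' A. apply eMu.
    apply H1. eapply agree_le; [|eauto]; lia. apply H2. eapply agree_le; [|eauto]; lia.
- destruct H as [v|g gs v y ys Hg Hgs].
  + exists 0; intros; constructor.
  + destruct (cont _ _ _ _ Hg) as [N1 H1]. destruct (conts _ _ _ _ Hgs) as [N2 H2].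
    exists (N1 + N2). intros p' A. constructor. apply H1. eapply agree_le; [|eauto]; lia.
    apply H2. eapply agree_le; [|eauto]; lia.
Qed.

Lemma lim_unif p q0 : lim_rel p q0 -> forall N, exists M, forall n, M <= n -> forall j, j < N -> p (to_nat (n, j)) = q0 j.
Proof.
  intros Hl N. induction N.
  - exists 0. intros; lia.
  - destruct IHN as [M1 H1]. destruct (Hl N) as [M2 H2]. exists (M1 + M2). intros n Hn j Hj.
    destruct (Nat.eq_dec j N). subst; apply H2; lia. apply H1; lia.
Qed.

Definition Kj eK := C (T 1 eK) [C FST [rProj 0]; C SND [rProj 0]].

Lemma jump_mono {X Y Z W : repr_space} (g : problem X Y) (h : problem Z W) eH eK :
  (forall p, exists q, runs eK p q) ->
  (forall G, realizes (fun p q => G p = Some q) h ->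
     realizes (fun p q => exists q1 q2, runs eK p q1 /\ G q1 = Some q2 /\ runs eH q2 q) g) ->
  sW (jump g) (jump h).
Proof.
  intros Htot Hred.
  set (Kf p := proj1_sig (constructive_indefinite_description _ (Htot p))).
  assert (HKf : forall p, runs eK p (Kf p)).
  { intros p. unfold Kf. destruct (constructive_indefinite_description _ _); auto. }
  exists eH, (Kj eK). intros G HG p x Hp Hd.
  simpl in Hp. destruct Hp as [q0 [Hl Hq0]].
  set (t m := Kf (fun j => p (to_nat (fst (of_nat m), j))) (snd (of_nat m))).
  assert (HK' : runs (Kj eK) p t).
  { intros m. unfold Kj. eapply evalC.
    - constructor. eapply evalC. constructor; [apply eProj|constructor]. apply FST_ok.
      constructor. eapply evalC. constructor; [apply eProj|constructor]. apply SND_ok. constructor.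
    - simpl. apply (T_ok p (fst (of_nat m)) eK [snd (of_nat m)]); auto. apply HKf. }
  set (q1 := Kf q0).
  assert (Hlt : lim_rel t q1).
  { intros k. destruct (cont _ _ _ _ (HKf q0 k)) as [N HN]. destruct (lim_unif p q0 Hl N) as [M HM].
    exists M. intros n Hn. unfold t. rewrite cancel_of_to. cbn [fst snd].
    eapply eval_det. apply HKf. apply HN. intros j Hj. apply HM; auto. }
  set (Gh q := if excluded_middle_informative (q = q1) then G t else G (fun m => q (snd (of_nat m)))).
  assert (HGh : realizes (fun p q => Gh p = Some q) h).
  { intros q z Hq Hdz. unfold Gh. destruct (excluded_middle_informative (q = q1)).
    - subst q. apply HG; auto. simpl. exists q1. auto.
    - apply HG; auto. simpl. exists q. split; auto. intros k. exists 0. intros n0 _.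
      rewrite cancel_of_to. reflexivity. }
  destruct (Hred Gh HGh q0 x Hq0 Hd) as [qq [[a [b [R1 [R2 R3]]]] Hy]].
  assert (a = q1) by (eapply runs_fun; eauto). subst a.
  unfold Gh in R2. destruct (excluded_middle_informative (q1 = q1)); [|congruence].
  exists qq. split; auto. exists t, b. auto.
Qed.

Lemma sW_total_compl {X Y Z W : repr_space} (f : problem X Y) (h : problem Z W) :
  sW (completion f) h -> exists eH eK, (forall p, exists q, runs eK p q) /\
  (forall G, realizes (fun p q => G p = Some q) h ->
     realizes (fun p q => exists q1 q2, runs eK p q1 /\ G q1 = Some q2 /\ runs eH q2 q) (completion f)).
Proof.
  intros [eH [eK H]]. exists eH, eK. split; auto. intros p.
  destruct (realizer_exists h) as [G0 HG0]. destruct (compl_delta_ex X p) as [xo Hxo].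
  destruct (completion_total f xo) as [yo Hyo].
  destruct (H G0 HG0 p xo Hxo (ex_intro _ yo Hyo)) as [q [[q1 [q2 [R _]]] _]]. eauto.
Qed.

Lemma jump_mono_compl {X Y Z W : repr_space} (f : problem X Y) (h : problem Z W) :
  sW (completion f) h -> sW (jump (completion f)) (jump h).
Proof.
  intros H. destruct (sW_total_compl f h H) as [eH [eK [Ht Hr]]]. eapply jump_mono; eauto.
Qed.

Theorem proposition4p17 (X Y : repr_space) (f : problem X Y) :
  sW (completion (jump f)) (jump (completion f)) /\
  sW_equiv (jump (completion f)) (completion (jump (completion f))) /\
  (sW_equiv f (completion f) -> sW_equiv (jump f) (completion (jump f))).
Proof.
  split; [apply part1|]. split.
  - split. apply L4. eapply sW_trans. apply (part1 (completion_space X) (completion_space Y) (completion f)).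
    apply jump_mono_compl. apply L5.
  - intros [H1 H2]. split. apply L4. eapply sW_trans. apply part1. apply jump_mono_compl. exact H2.
Qed.
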